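(* Let $\phi$ be a flow of a compact metric space $X$. If $\phi$ is expansive on $X\setminus Sing(\phi)$, then $Sing(\phi)$ is dynamically isolated.
   Context: A flow is a continuous $\phi:\mathbb{R}\times X\to X$ with $\phi_0=\mathrm{id}$, $\phi_{t+s}=\phi_t\circ\phi_s$; $\phi_I(x)=\{\phi_t(x):t\in I\}$; $Sing(\phi)$ is the set of fixed points. $\phi$ is expansive on $\Lambda\subset X$ if for every $\epsilon>0$ there is $\delta>0$ such that whenever $x,y\in\Lambda$ and a continuous $s:\mathbb{R}\to\mathbb{R}$ with $s(0)=0$ satisfy $d(\phi_t(x),\phi_{s(t)}(y))\le\delta$ for all $t$, then $y\in\phi_{[-\epsilon,\epsilon]}(x)$. A compact invariant set $K$ is dynamically isolated if there is a neighborhood $U$ of $K$ with $K=\bigcap_{t\in\mathbb{R}}\phi_t(U)$. *)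

(* Defs.v *)
From HB Require Import structures.
From mathcomp Require Import all_boot all_order all_algebra.
From mathcomp Require Import all_classical all_reals all_analysis.
Set Implicit Arguments. Unset Strict Implicit. Unset Printing Implicit Defensive.
Import Order.TTheory GRing.Theory Num.Theory.
Import numFieldTopology.Exports.
Local Open Scope classical_set_scope.
Local Open Scope ring_scope.

Definition is_flow {R : realType} {X : topologicalType} (phi : R -> X -> X) : Prop :=
  continuous (fun p : R * X => phi p.1 p.2) /\
  (forall x, phi 0 x = x) /\
  (forall t s x, phi (t + s) x = phi t (phi s x)).

Definition orbit_seg {R : realType} {X : Type} (phi : R -> X -> X)
  (I : set R) (x : X) : set X := [set phi t x | t in I].

Definition Sing {R : realType} {X : Type} (phi : R -> X -> X) : set X :=
  [set x | forall t, phi t x = x].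

Definition expansive_on {R : realType} {X : metricType R} (phi : R -> X -> X)
  (L : set X) : Prop :=
  forall eps : R, 0 < eps -> exists2 delta : R, 0 < delta &
    forall x y, L x -> L y ->
    forall s : R -> R, continuous s -> s 0 = 0 ->
      (forall t, mdist (phi t x) (phi (s t) y) <= delta) ->
      orbit_seg phi `[- eps, eps] x y.

Definition dyn_isolated {R : realType} {X : topologicalType} (phi : R -> X -> X)
  (K : set X) : Prop :=
  [/\ compact K,
      (forall t x, K x -> K (phi t x)) &
      exists U : set X,
        (exists V : set X, [/\ open V, K `<=` V & V `<=` U]) /\
        K = \bigcap_(t in [set: R]) (phi t @` U)].

(* Main.v *)
From HB Require Import structures.
From mathcomp Require Import all_boot all_order all_algebra.
From mathcomp Require Import all_classical all_reals all_analysis.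
From mathcomp Require Import lra.
Require Import Defs.
Import Order.TTheory GRing.Theory Num.Theory.
Import numFieldTopology.Exports.
Set Implicit Arguments.
Local Open Scope classical_set_scope.
Local Open Scope ring_scope.

Lemma mtri {R : realType} {X : metricType R} (x y z : X) :
  mdist x z <= mdist x y + mdist y z.
Proof. exact: metric_triangle. Qed.

Lemma msym {R : realType} {X : metricType R} (x y : X) :
  mdist x y = mdist y x.
Proof. exact: metric_sym. Qed.

Lemma slow (R : realType) (X : metricType R) (phi : R -> X -> X) :
  is_flow phi -> forall e : R, 0 < e -> forall q, Sing phi q ->
  nbhs q [set z | forall t, 0 <= t <= 3 -> mdist (phi t z) z < e].
Proof.
move=> [cont [h0 hs]] e e0 q Sq.
have cK : compact `[0, 3 : R] := @segment_compact R 0 3.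
have H := (compact_near_coveringP _).1 cK X (nbhs q) (fun z t => mdist (phi t z) z < e).
have e20 : 0 < e / 2 by rewrite divr_gt0.
have FF : Filter (nbhs q) by apply: nbhs_filter.
have {}H := H FF.
apply: filterS (H _) => [z Bz t /andP[t0 t3]|].
  by apply: Bz => //=; rewrite in_itv /= t0 t3.
move=> t _.
have := cont (t, q) (ball (phi t q) (e/2)) (nbhsx_ballx _ _ e20).
rewrite /= Sq.
move=> [[A B] /= [At Bq] AB].
exists (A, B `&` ball q (e/2)) => /=.
  split => //; apply: filterI => //; exact: nbhsx_ballx.
move=> [t' z] /= [At' [Bz qz]].
have := AB (t', z) (conj At' Bz); rewrite /= ballEmdist /=.
move: qz; rewrite ballEmdist /= => qz pz.
rewrite (le_lt_trans (metric_triangle _ q _))//.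
by rewrite (splitr e) ltrD // metric_sym.
Qed.
Lemma period_red (R : realType) (X : metricType R) (phi : R -> X -> X) (P : R) (z : X) :
  is_flow phi -> 0 < P -> phi P z = z ->
  forall t, exists r, 0 <= r <= P /\ phi t z = phi r z.
Proof.
move=> [_ [h0 hs]] P0 Pz.
have Hn : forall n : nat, phi (n%:R * P) z = z.
  elim=> [|n IH]; first by rewrite mul0r h0.
  by rewrite -addn1 natrD mulrDl mul1r hs Pz IH.
have Hk : forall k : int, phi (k%:~R * P) z = z.
  case=> n; first exact: Hn.
  rewrite NegzE intrN mulNr.
  by rewrite -{1}(Hn n.+1) -hs addNr h0.
move=> t; set k := Num.floor (t / P).
exists (t - k%:~R * P); split.
  apply/andP; split.
    rewrite subr_ge0 -ler_pdivlMr //; exact: floor_le.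
  rewrite lerBlDr -[P in P + _]mul1r -mulrDl -ler_pdivrMr //.
  by have := floorD1_gt (t / P); rewrite intrD addrC => /ltW.
have {1}-> : t = (t - k%:~R * P) + k%:~R * P by rewrite subrK.
by rewrite hs Hk.
Qed.
Lemma sing_sep (R : realType) (X : metricType R) (phi : R -> X -> X) (w : X) :
  is_flow phi -> ~ Sing phi w ->
  exists2 r : R, 0 < r & forall q, Sing phi q -> r <= mdist w q.
Proof.
move=> [cont [h0 hs]] /existsNP [t tw].
set d := mdist (phi t w) w.
have d0 : 0 < d by rewrite mdist_gt0; apply/eqP.
have d20 : 0 < d / 2 by rewrite divr_gt0.
have := cont (t, w) (ball (phi t w) (d/2)) (nbhsx_ballx _ _ d20).
move=> [[A B] /= [At Bw] AB].
have [r r0 rB] := (nbhs_ballP _ _).1 Bw.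
exists (Num.min r (d/2)); first by rewrite lt_min r0 d20.
move=> q Sq; rewrite leNgt; apply/negP; rewrite lt_min => /andP[qr qd].
have At0 : A t.
  case: At => e /= e0; apply; exact: ballxx.
have Bq : B q by apply: rB; rewrite ballEmdist.
have := AB (t, q) (conj At0 Bq); rewrite /= ballEmdist /= Sq => pq.
have : d < d.
  rewrite {1}/d (le_lt_trans (metric_triangle _ q _))//.
  by rewrite (splitr d) ltrD // metric_sym.
by rewrite ltxx.
Qed.

Lemma sing_flow (R : realType) (X : metricType R) (phi : R -> X -> X) (z : X) (a : R) :
  is_flow phi -> Sing phi (phi a z) -> Sing phi z.
Proof.
move=> [_ [h0 hs]] S t.
have E : z = phi (- a) (phi a z) by rewrite -hs addNr h0.
by rewrite E !S.
Qed.

Lemma core (R : realType) (X : metricType R) (phi : R -> X -> X) (d : R) (z : X) :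
  is_flow phi -> 0 < d ->
  (forall x y, ~ Sing phi x -> ~ Sing phi y -> forall s : R -> R, continuous s -> s 0 = 0 ->
     (forall t, mdist (phi t x) (phi (s t) y) <= d) -> orbit_seg phi `[- 1, 1] x y) ->
  ~ Sing phi z ->
  (forall t r, 0 <= r <= 3 -> mdist (phi r (phi t z)) (phi t z) < d / 4) ->
  forall t, mdist (phi t z) z < d / 4.
Proof.
move=> fl d0 Hexp nz V0.
have [cont [h0 hs]] := fl.
have d4 : d / 4 <= d by lra.
have := Hexp z (phi 2 z) nz (fun S => nz (@sing_flow _ _ _ z 2 fl S)) id (fun x => cvg_id) erefl.
case.
  move=> t /=; rewrite -hs addrC hs metric_sym.
  apply: ltW; apply: lt_le_trans d4; apply: V0.
  apply/andP; split; lra.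
move=> u /=; rewrite in_itv /= => /andP[u1 u2] hu.
have Pz : phi (2 - u) z = z by rewrite addrC hs -hu -hs addNr h0.
have P0 : 0 < 2 - u by lra.
move=> t; have [r [/andP[r0 rP] ->]] := @period_red _ _ _ _ z fl P0 Pz t.
have := V0 0 r; rewrite h0; apply; rewrite r0 /=.
lra.
Qed.

Unset Implicit Arguments.

Theorem mainTheorem13 (R : realType) (X : metricType R) (phi : R -> X -> X) :
  is_flow phi -> compact [set: X] ->
  expansive_on phi (~` Sing phi) ->
  dyn_isolated phi (Sing phi).
Proof.
move=> fl cX Hexp.
have [cont [h0 hs]] := fl.
have [d d0 Hd] := Hexp 1 ltr01.
pose V0 := fun w => forall r, 0 <= r <= 3 -> mdist (phi r w) w < d / 4.
have Hcore : forall z, ~ Sing phi z -> (forall t, V0 (phi t z)) ->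
    forall t, mdist (phi t z) z < d / 4.
  move=> z nz Vz; exact: (@core _ _ _ d z fl d0 Hd nz (fun t => Vz t)).
have SingC : closed (Sing phi).
  move=> w cw; apply: contrapT => nw.
  have [r r0 rS] := sing_sep fl nw.
  have [q [Sq bq]] := cw (ball w r) (nbhsx_ballx _ _ r0).
  move: bq; rewrite ballEmdist /= => bq.
  by have := rS q Sq; rewrite leNgt bq.
have SingK : compact (Sing phi) := subclosed_compact SingC cX (@subsetT _ _).
pose rho := d / 8.
have rho0 : 0 < rho by rewrite /rho; lra.
have key := (compact_near_coveringP _).1 SingK R (0^'+)
  (fun e q => forall z, mdist q z < e ->
     (forall t, V0 (phi t z) /\ exists q', Sing phi q' /\ mdist q' (phi t z) < e) ->
     Sing phi z).
have FF : Filter (0^'+ : set_system R) by typeclasses eauto.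
have {}key := key FF.
have {}key : \forall e \near 0^'+, Sing phi `<=` (fun q : X =>
     forall z : X, mdist q z < e ->
     (forall t : R, V0 (phi t z) /\ (exists q' : X, Sing phi q' /\ mdist q' (phi t z) < e)) ->
     Sing phi z).
  apply: key => q Sq.
  case: (pselect (exists w, ~ Sing phi w /\ mdist q w < 2 * rho)).
    move=> [w [nw qw]].
    have [r r0 rS] := sing_sep fl nw.
    exists (ball q rho, [set e | e < Num.min rho r]) => /=.
      split; first exact: nbhsx_ballx.
      by apply: nbhs_right_lt; rewrite lt_min rho0 r0.
    move=> [q' e] /= [qq' he] z q'z Hz; apply: contrapT => nz.
    move: qq' he; rewrite ballEmdist /= lt_min => qq' /andP[er erho].
    have hb := Hcore z nz (fun t => (Hz t).1).
    have Hd' := Hd z w nz nw (fun _ => 0) (fun _ => cvg_cst _) erefl.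
    have [u _ hu] : orbit_seg phi `[-1, 1] z w.
      apply: Hd' => t; rewrite h0.
      have h1 := mtri (phi t z) z w.
      have h2 := mtri z q w.
      have h3 := mtri q q' z.
      have h4 := hb t.
      rewrite (msym z q) in h2.
      rewrite /rho in qq' er qw; lra.
    have [q'' [Sq'' hq'']] := (Hz u).2; rewrite hu in hq''.
    have := rS q'' Sq''; rewrite msym; lra.
  move=> nex.
  exists (ball q rho, [set e | e < rho]) => /=.
    split; first exact: nbhsx_ballx.
    exact: nbhs_right_lt.
  move=> [q' e] /= [qq' he] z q'z Hz; apply: contrapT => nz.
  move: qq'; rewrite ballEmdist /= => qq'.
  apply: nex; exists z; split => //.
  have h3 := mtri q q' z; lra.
have [e [e0 He]] := filter_ex (filterI (nbhs_right_gt 0) key).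
pose U := fun z => V0 z /\ exists q, Sing phi q /\ mdist q z < e.
split => //.
  by move=> t x Sx s; rewrite !Sx.
exists U; split.
  exists (interior U); split; [exact: open_interior| |exact: interior_subset].
  move=> q Sq; rewrite /interior.
  have d40 : 0 < d / 4 by lra.
  apply: filterS (filterI (@slow _ _ _ fl (d / 4) d40 q Sq) (nbhsx_ballx q e e0)).
  move=> z [hz bz]; split; first exact: hz.
  by exists q; split => //; move: bz; rewrite ballEmdist.
apply/seteqP; split.
  move=> q Sq t _; exists q; last by rewrite Sq.
  split.
    move=> r _; rewrite Sq mdistxx; lra.
  by exists q; split => //; rewrite mdistxx.
move=> z Hz.
have Ut : forall t, U (phi t z).
  move=> t; have [w Uw hw] := Hz (- t) I.
  by rewrite -hw -hs subrr h0.
have := (Ut 0).2; rewrite h0 => -[q [Sq qz]].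
exact: (He q Sq z qz Ut).
Qed.
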